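(* There exists a constant $C>0$ such that for all $j\in\mathbb Z^2$ with $|j|\ge2$, $$\sum_{k,l\in\mathbb Z^2_0}|\langle H_{e_j},\tilde e_k\otimes\tilde e_l\rangle|^2\le C|j|^2\log|j|.$$
   Context: - $\mathbb T^2=\mathbb R^2/\mathbb Z^2$ and $\mathbb Z^2_0=\mathbb Z^2\setminus\{0\}$. - $\mathbb Z^2_+=\{k:k_1>0\text{ or }(k_1=0,k_2>0)\}$ and $\mathbb Z^2_-=-\mathbb Z^2_+$. - $e_k=\sqrt2\cos(2\pi k\cdot x)$ for $k\in\mathbb Z^2_+$, and $e_k=\sqrt2\sin(2\pi k\cdot x)$ for $k\in\mathbb Z^2_-$. - $\tilde e_k(x)=e^{2\pi ik\cdot x}$ and $k^\perp=(k_2,-k_1)$. - $K(x)=-2\pi\sum_{k\in\mathbb Z^2_0}\frac{k^\perp}{|k|^2}\sin(2\pi k\cdot x)$. - $H_\phi(x,y)=\tfrac12K(x-y)\cdot(\nabla\phi(x)-\nabla\phi(y))$. - $\langle H,\tilde e_k\otimes\tilde e_l\rangle=\int_{(\mathbb T^2)^2}H(x,y)\tilde e_k(x)\tilde e_l(y)\,dx\,dy$. *)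

(* Defs.v *)
From Stdlib Require Import Reals ZArith List.
Open Scope R_scope.

Definition C := (R * R)%type.
Definition C0 : C := (0, 0).
Definition RtoC (r : R) : C := (r, 0).
Definition Ci : C := (0, 1).
Definition Cadd (z w : C) : C := (fst z + fst w, snd z + snd w).
Definition Copp (z : C) : C := (- fst z, - snd z).
Definition Csub (z w : C) : C := Cadd z (Copp w).
Definition Cmul (z w : C) : C :=
  (fst z * fst w - snd z * snd w, fst z * snd w + snd z * fst w).
Definition Cnorm2 (z : C) : R := fst z ^ 2 + snd z ^ 2.

(** complex 2-vectors, with the bilinear (non-conjugated) dot product *)
Definition CV := (C * C)%type.
Definition CV0 : CV := (C0, C0).
Definition CVsub (u v : CV) : CV := (Csub (fst u) (fst v), Csub (snd u) (snd v)).
Definition CVscale (z : C) (u : CV) : CV := (Cmul z (fst u), Cmul z (snd u)).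
Definition Cdot (u v : CV) : C := Cadd (Cmul (fst u) (fst v)) (Cmul (snd u) (snd v)).

Definition Z2 := (Z * Z)%type.
Definition Z2zero : Z2 := (0%Z, 0%Z).
Definition Z2eqb (k l : Z2) : bool := (Z.eqb (fst k) (fst l) && Z.eqb (snd k) (snd l))%bool.
Definition Z2add (k l : Z2) : Z2 := (fst k + fst l, snd k + snd l)%Z.
Definition Z2opp (k : Z2) : Z2 := (- fst k, - snd k)%Z.
Definition Z2sub (k l : Z2) : Z2 := Z2add k (Z2opp l).
Definition Z2norm2 (k : Z2) : R := IZR (fst k) ^ 2 + IZR (snd k) ^ 2.
Definition Z2norm (k : Z2) : R := sqrt (Z2norm2 k).
Definition Z2plusb (k : Z2) : bool :=
  (Z.ltb 0 (fst k) || (Z.eqb (fst k) 0 && Z.ltb 0 (snd k)))%bool.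
Definition Z2minusb (k : Z2) : bool := Z2plusb (Z2opp k).

(** * Functions on T^2 represented on the Fourier side.
    A trigonometric polynomial on T^2 is a finite list of pairs (a, c)
    standing for  sum c * ẽ_a(x),  ẽ_a(x) = exp(2 pi i a.x). *)
Definition tpoly := list (Z2 * C).
Definition tpolyV := list (Z2 * CV).

(* e_k = sqrt2 cos(2 pi k.x) = (sqrt2/2)(ẽ_k + ẽ_{-k})        for k in Z^2_+,
   e_k = sqrt2 sin(2 pi k.x) = (sqrt2/(2i))(ẽ_k - ẽ_{-k})     for k in Z^2_-.
   (e_0 is not defined in the paper; it is set to 0 here and never used.) *)
Definition e_fun (k : Z2) : tpoly :=
  if Z2plusb k then
    ((k, RtoC (sqrt 2 / 2)) :: (Z2opp k, RtoC (sqrt 2 / 2)) :: nil)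
  else if Z2minusb k then
    ((k, (0, - (sqrt 2 / 2))) :: (Z2opp k, (0, sqrt 2 / 2)) :: nil)
  else nil.

(* gradient: grad ẽ_a = 2 pi i a ẽ_a *)
Definition grad (P : tpoly) : tpolyV :=
  map (fun ac : Z2 * C =>
         let a := fst ac in let c := snd ac in
         (a, CVscale (Cmul (Cmul (RtoC (2 * PI)) Ci) c)
                     (RtoC (IZR (fst a)), RtoC (IZR (snd a))))) P.

(** * The Biot–Savart kernel
    K(x) = sum_{m <> 0} v_m sin(2 pi m.x),  v_m = -2 pi m^perp / |m|^2,
    with m^perp = (m2, -m1).  Its (distributional) Fourier coefficients are
    obtained from sin(2 pi m.x) = (ẽ_m - ẽ_{-m})/(2i). *)
Definition Kv (m : Z2) : CV :=
  if Z2eqb m Z2zero then CV0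
  else (RtoC (- 2 * PI * IZR (snd m) / Z2norm2 m),
        RtoC (- 2 * PI * (- IZR (fst m)) / Z2norm2 m)).
(* 1/(2i) = -i/2 *)
Definition Khat (p : Z2) : CV := CVscale (0, - (1/2)) (CVsub (Kv p) (Kv (Z2opp p))).

(** * Functions on T^2 x T^2 via Fourier coefficients:
    F p q = coefficient of ẽ_p(x) ẽ_q(y). *)
Definition series2V := Z2 -> Z2 -> CV.
Definition series2 := Z2 -> Z2 -> C.
Definition tpoly2V := list ((Z2 * Z2) * CV).

(* (x,y) |-> K(x - y) = sum_m K̂(m) ẽ_m(x) ẽ_{-m}(y) *)
Definition K_diff : series2V :=
  fun p q => if Z2eqb q (Z2opp p) then Khat p else CV0.

Definition lift_x (G : tpolyV) : tpoly2V :=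
  map (fun ac : Z2 * CV => ((fst ac, Z2zero), snd ac)) G.
Definition lift_y (G : tpolyV) : tpoly2V :=
  map (fun ac : Z2 * CV => ((Z2zero, fst ac), snd ac)) G.

(* Fourier coefficients of the pointwise dot product F(x,y) . G(x,y),
   G a trigonometric polynomial (Cauchy product, finite sum). *)
Definition dot_mul (F : series2V) (G : tpoly2V) : series2 :=
  fun p q =>
    fold_right (fun abc acc =>
      Cadd (Cdot (F (Z2sub p (fst (fst abc))) (Z2sub q (snd (fst abc)))) (snd abc)) acc)
      C0 G.

(* H_phi(x,y) = 1/2 K(x-y) . (grad phi(x) - grad phi(y)) *)
Definition H_fun (phi : tpoly) : series2 :=
  fun p q => Cmul (RtoC (1/2))
    (Csub (dot_mul K_diff (lift_x (grad phi)) p q)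
          (dot_mul K_diff (lift_y (grad phi)) p q)).

(* <H, ẽ_k ⊗ ẽ_l> = ∫∫ H(x,y) ẽ_k(x) ẽ_l(y) dx dy = Ĥ(-k,-l) *)
Definition pairing (H : series2) (k l : Z2) : C := H (Z2opp k) (Z2opp l).

Definition partial_sum (H : series2) (S : list (Z2 * Z2)) : R :=
  fold_right (fun kl acc => Cnorm2 (pairing H (fst kl) (snd kl)) + acc) 0 S.

(* Main.v *)
Require Import Defs.
From Stdlib Require Import Reals ZArith List Lra Lia.
Open Scope R_scope.

Lemma Z2eqb_iff a b : Z2eqb a b = true <-> a = b.
Proof.
  destruct a as [a1 a2], b as [b1 b2]; unfold Z2eqb; simpl.
  rewrite Bool.andb_true_iff, !Z.eqb_eq. split.
  - intros [-> ->]; reflexivity.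
  - intros H; inversion H; auto.
Qed.

Lemma Z2eqb_false a b : a <> b -> Z2eqb a b = false.
Proof. intros H. destruct (Z2eqb a b) eqn:E; auto. apply Z2eqb_iff in E. tauto. Qed.

Lemma Z2eqb_ext a b c d : (a = b <-> c = d) -> Z2eqb a b = Z2eqb c d.
Proof.
  intros H. destruct (Z2eqb c d) eqn:E.
  - apply Z2eqb_iff, H, Z2eqb_iff, E.
  - apply Z2eqb_false. intro X. apply H, Z2eqb_iff in X. congruence.
Qed.

Lemma Kx p q a : K_diff (Z2sub p a) (Z2sub q Z2zero) =
  if Z2eqb (Z2add p q) a then Khat (Z2sub p a) else CV0.
Proof.
  unfold K_diff. rewrite (Z2eqb_ext _ _ (Z2add p q) a); auto.
  destruct p as [p1 p2], q as [q1 q2], a as [a1 a2].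
  unfold Z2add, Z2sub, Z2opp, Z2add, Z2zero; simpl.
  split; intro E; inversion E; f_equal; lia.
Qed.

Lemma Ky p q a : K_diff (Z2sub p Z2zero) (Z2sub q a) =
  if Z2eqb (Z2add p q) a then Khat p else CV0.
Proof.
  assert (Z2sub p Z2zero = p) as Hp.
  { destruct p; unfold Z2sub, Z2add, Z2opp, Z2zero; simpl; f_equal; lia. }
  unfold K_diff. rewrite Hp. rewrite (Z2eqb_ext _ _ (Z2add p q) a); auto.
  destruct p as [p1 p2], q as [q1 q2], a as [a1 a2].
  unfold Z2add, Z2sub, Z2opp, Z2add, Z2zero; simpl.
  split; intro E; inversion E; f_equal; lia.
Qed.

Lemma norm2_pos m : m <> Z2zero -> 0 < Z2norm2 m.
Proof.
  destruct m as [m1 m2]; unfold Z2norm2, Z2zero; simpl. intros H.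
  destruct (Z.eq_dec m1 0) as [->|H1].
  - assert (m2 <> 0%Z) by (intro; subst; auto).
    assert (IZR m2 <> 0) by (apply not_0_IZR; auto). simpl. nra.
  - assert (IZR m1 <> 0) by (apply not_0_IZR; auto). nra.
Qed.

Lemma Khat_val m : m <> Z2zero ->
  Khat m = ((0, 2 * PI * IZR (snd m) / Z2norm2 m), (0, - (2 * PI * IZR (fst m) / Z2norm2 m))).
Proof.
  intros H. pose proof (norm2_pos m H) as Hn.
  assert (Hm : Z2opp m <> Z2zero).
  { destruct m as [m1 m2]; unfold Z2opp, Z2zero in *; simpl; intro E; inversion E; apply H; f_equal; lia. }
  assert (Z2norm2 (Z2opp m) = Z2norm2 m) as Hnn.
  { destruct m; unfold Z2norm2, Z2opp; simpl; rewrite !opp_IZR; ring. }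
  unfold Khat, Kv. rewrite (Z2eqb_false _ _ H), (Z2eqb_false _ _ Hm), Hnn.
  destruct m as [m1 m2]; unfold Z2opp; simpl. rewrite !opp_IZR.
  unfold CVscale, CVsub, Csub, Cadd, Copp, Cmul, RtoC; simpl.
  f_equal; f_equal; field; lra.
Qed.

Definition wedge (k l : Z2) : R := IZR (fst k) * IZR (snd l) - IZR (snd k) * IZR (fst l).
Definition G0 (k l : Z2) : R := 4 * PI ^ 4 * wedge k l ^ 2 * (/ Z2norm2 l - / Z2norm2 k) ^ 2.

Lemma opp_nz m : m <> Z2zero -> Z2opp m <> Z2zero.
Proof. destruct m as [m1 m2]; unfold Z2opp, Z2zero; simpl; intros H E; inversion E; apply H; f_equal; lia. Qed.

Lemma pairing_gen j c1 c2 k l : j <> Z2zero -> k <> Z2zero -> l <> Z2zero ->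
  Cnorm2 (pairing (H_fun ((j,c1)::(Z2opp j,c2)::nil)) k l) =
  (if Z2eqb (Z2add k l) (Z2opp j) then Cnorm2 c1 * G0 k l else 0) +
  (if Z2eqb (Z2add k l) j then Cnorm2 c2 * G0 k l else 0).
Proof.
  intros Hj Hk Hl.
  unfold pairing, H_fun, dot_mul, lift_x, lift_y, grad; cbn [fold_right map fst snd].
  rewrite !Kx, !Ky.
  rewrite (Z2eqb_ext (Z2add (Z2opp k) (Z2opp l)) j (Z2add k l) (Z2opp j)).
  2:{ destruct k, l, j; unfold Z2add, Z2opp; simpl; split; intro E; inversion E; f_equal; lia. }
  rewrite (Z2eqb_ext (Z2add (Z2opp k) (Z2opp l)) (Z2opp j) (Z2add k l) j).
  2:{ destruct k, l, j; unfold Z2add, Z2opp; simpl; split; intro E; inversion E; f_equal; lia. }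
  pose proof (norm2_pos k Hk) as Hnk. pose proof (norm2_pos l Hl) as Hnl.
  destruct (Z2eqb (Z2add k l) (Z2opp j)) eqn:E1.
  - apply Z2eqb_iff in E1.
    assert (Z2eqb (Z2add k l) j = false) as E2.
    { apply Z2eqb_false. rewrite E1. destruct j as [a b]; unfold Z2opp, Z2zero in *; simpl; intro E; inversion E; apply Hj; f_equal; lia. }
    rewrite E2.
    assert (Z2sub (Z2opp k) j = l) as El.
    { destruct k, l, j; unfold Z2sub, Z2add, Z2opp in *; simpl in *; inversion E1; f_equal; lia. }
    rewrite El, (Khat_val l Hl), (Khat_val (Z2opp k) (opp_nz k Hk)).
    assert (Z2norm2 (Z2opp k) = Z2norm2 k) as Hnn.
    { destruct k; unfold Z2norm2, Z2opp; simpl; rewrite !opp_IZR; ring. }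
    rewrite Hnn.
    destruct k as [k1 k2], l as [l1 l2], j as [j1 j2]; unfold Z2add, Z2opp in *; simpl in *.
    inversion E1 as [[Ej1 Ej2]].
    assert (j1 = (- (k1 + l1))%Z) as -> by lia.
    assert (j2 = (- (k2 + l2))%Z) as -> by lia.
    destruct c1 as [x y], c2 as [x' y'].
    unfold G0, wedge, Cnorm2, Cmul, Csub, Cadd, Copp, Cdot, CVscale, CV0, C0, RtoC, Ci in *; simpl in *.
    rewrite ?opp_IZR, ?plus_IZR. field. unfold Z2norm2 in *; simpl in *; lra.
  - destruct (Z2eqb (Z2add k l) j) eqn:E2.
    + apply Z2eqb_iff in E2.
      assert (Z2sub (Z2opp k) (Z2opp j) = l) as El.
      { destruct k, l, j; unfold Z2sub, Z2add, Z2opp in *; simpl in *; inversion E2; f_equal; lia. }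
      rewrite El, (Khat_val l Hl), (Khat_val (Z2opp k) (opp_nz k Hk)).
      assert (Z2norm2 (Z2opp k) = Z2norm2 k) as Hnn.
      { destruct k; unfold Z2norm2, Z2opp; simpl; rewrite !opp_IZR; ring. }
      rewrite Hnn.
      destruct k as [k1 k2], l as [l1 l2], j as [j1 j2]; unfold Z2add, Z2opp in *; simpl in *.
      inversion E2 as [[Ej1 Ej2]].
      assert (j1 = (k1 + l1)%Z) as -> by lia.
      assert (j2 = (k2 + l2)%Z) as -> by lia.
      destruct c1 as [x y], c2 as [x' y'].
      unfold G0, wedge, Cnorm2, Cmul, Csub, Cadd, Copp, Cdot, CVscale, CV0, C0, RtoC, Ci in *; simpl in *.
      rewrite ?opp_IZR, ?plus_IZR. field. unfold Z2norm2 in *; simpl in *; lra.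
    + unfold Cnorm2, Cmul, Csub, Cadd, Copp, Cdot, CVscale, CV0, C0, RtoC, Ci; simpl. ring.
Qed.

Lemma R1r k1 k2 l1 l2 : let nk := k1^2 + k2^2 in let nl := l1^2+l2^2 in
  0 < nk -> 0 < nl ->
  (k1 * l2 - k2 * l1)^2 * (/ nl - / nk)^2 <= ((k1+l1)^2 + (k2+l2)^2) * (/ nk + / nl).
Proof.
  intros nk nl Hk Hl.
  set (S2 := (k1+l1)^2 + (k2+l2)^2).
  set (w := k1 * l2 - k2 * l1).
  assert (Wk : w^2 <= nk * S2).
  { assert (nk * S2 - w^2 = (k1*(k1+l1) + k2*(k2+l2))^2) by (unfold nk, S2, w; ring). pose proof (pow2_ge_0 (k1*(k1+l1) + k2*(k2+l2))). lra. }
  assert (Wl : w^2 <= nl * S2).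
  { assert (nl * S2 - w^2 = (l1*(k1+l1) + l2*(k2+l2))^2) by (unfold nl, S2, w; ring). pose proof (pow2_ge_0 (l1*(k1+l1) + l2*(k2+l2))). lra. }
  set (a := / nk). set (b := / nl).
  assert (Ha : 0 < a) by (apply Rinv_0_lt_compat; auto).
  assert (Hb : 0 < b) by (apply Rinv_0_lt_compat; auto).
  assert (w^2 * a <= S2).
  { replace S2 with (nk * S2 * a) by (unfold a; field; lra). apply Rmult_le_compat_r; lra. }
  assert (w^2 * b <= S2).
  { replace S2 with (nl * S2 * b) by (unfold b; field; lra). apply Rmult_le_compat_r; lra. }
  assert (0 <= w^2) by nra.
  assert ((b - a)^2 <= a^2 + b^2) by nra.
  assert (w^2 * (b-a)^2 <= w^2 * (a^2+b^2)) by (apply Rmult_le_compat_l; lra).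
  assert (w^2 * (a^2+b^2) = (w^2 * a) * a + (w^2*b)*b) by ring.
  assert ((w^2 * a) * a <= S2 * a) by (apply Rmult_le_compat_r; lra).
  assert ((w^2 * b) * b <= S2 * b) by (apply Rmult_le_compat_r; lra).
  nra.
Qed.

Lemma R2r k1 k2 l1 l2 : let nk := k1^2 + k2^2 in let nl := l1^2+l2^2 in
  let S2 := (k1+l1)^2 + (k2+l2)^2 in
  0 < nk -> 0 < nl -> 16 * S2 <= nk ->
  (k1 * l2 - k2 * l1)^2 * (/ nl - / nk)^2 <= 36 * S2^2 / nk^2.
Proof.
  intros nk nl S2 Hk Hl HS.
  set (w := k1 * l2 - k2 * l1).
  set (d := k1*(k1+l1) + k2*(k2+l2)).
  assert (HS0 : 0 <= S2) by (unfold S2; pose proof (pow2_ge_0 (k1+l1)); pose proof (pow2_ge_0 (k2+l2)); lra).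
  assert (Wk : w^2 <= nk * S2).
  { assert (nk * S2 - w^2 = d^2) by (unfold nk, S2, w, d; ring). pose proof (pow2_ge_0 d). lra. }
  assert (Dk : d^2 <= nk * S2).
  { assert (nk * S2 - d^2 = w^2) by (unfold nk, S2, w, d; ring). pose proof (pow2_ge_0 w). lra. }
  assert (Enl : nl = S2 - 2 * d + nk) by (unfold nl, S2, d, nk; ring).
  assert (Dle : d <= nk / 4).
  { destruct (Rle_dec d (nk/4)); auto. assert (d^2 > (nk/4)^2) by nra. nra. }
  assert (Dge : - (nk / 4) <= d).
  { destruct (Rle_dec (-(nk/4)) d); auto. assert (d^2 > (nk/4)^2) by nra. nra. }
  assert (Hnl2 : nk / 2 <= nl) by lra.
  assert (Hdiff : (nk - nl)^2 <= 9 * S2 * nk).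
  { assert ((nk - nl)^2 = (2*d - S2)^2) by (rewrite Enl; ring).
    assert ((2*d - S2)^2 <= 8 * d^2 + 2 * S2^2) by (pose proof (pow2_ge_0 (2*d+S2)); nra).
    assert (S2^2 <= S2 * nk / 16) by nra. nra. }
  assert (E : (/ nl - / nk)^2 = (nk - nl)^2 / (nk^2 * nl^2)) by (field; lra).
  rewrite E.
  assert (P : w^2 * (nk-nl)^2 <= (nk * S2) * (9 * S2 * nk)).
  { apply Rmult_le_compat; auto; apply pow2_ge_0. }
  assert (nl^2 >= nk^2 / 4) by nra.
  apply (Rle_trans _ ((nk * S2) * (9 * S2 * nk) / (nk^2 * nl^2))).
  { unfold Rdiv. replace (w ^ 2 * ((nk - nl) ^ 2 * / (nk ^ 2 * nl ^ 2))) with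
      (w ^ 2 * (nk - nl) ^ 2 * / (nk ^ 2 * nl ^ 2)) by ring.
    apply Rmult_le_compat_r; auto. left; apply Rinv_0_lt_compat; apply Rmult_lt_0_compat; apply pow_lt; lra. }
  replace ((nk * S2) * (9 * S2 * nk) / (nk^2 * nl^2)) with (9 * S2^2 / nl^2) by (field; lra).
  unfold Rdiv. replace (36 * S2^2 * / nk^2) with (9 * S2^2 * / (nk^2/4)) by (field; lra).
  apply Rmult_le_compat_l; [nra|].
  apply Rinv_le_contravar; nra.
Qed.

Definition lsum {A} (f : A -> R) (L : list A) : R := fold_right (fun a acc => f a + acc) 0 L.

Lemma lsum_app {A} f (L1 L2 : list A) : lsum f (L1 ++ L2) = lsum f L1 + lsum f L2.
Proof. induction L1; simpl; [ring| rewrite IHL1; ring]. Qed.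

Lemma lsum_map {A B} (f : B -> R) (g : A -> B) L : lsum f (map g L) = lsum (fun x => f (g x)) L.
Proof. induction L; simpl; [ring| rewrite IHL; ring]. Qed.

Lemma lsum_nonneg {A} (f : A -> R) L : (forall x, In x L -> 0 <= f x) -> 0 <= lsum f L.
Proof. induction L; simpl; intros H; [lra|]. pose proof (H a (or_introl eq_refl)). pose proof (IHL (fun x Hx => H x (or_intror Hx))). lra. Qed.

Lemma lsum_le {A} (f g : A -> R) L : (forall x, In x L -> f x <= g x) -> lsum f L <= lsum g L.
Proof. induction L; simpl; intros H; [lra|]. pose proof (H a (or_introl eq_refl)). pose proof (IHL (fun x Hx => H x (or_intror Hx))). lra. Qed.

Lemma lsum_plus {A} (f g : A -> R) L : lsum (fun x => f x + g x) L = lsum f L + lsum g L.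
Proof. induction L; simpl; [ring| rewrite IHL; ring]. Qed.

Lemma lsum_scal {A} (f : A -> R) c L : lsum (fun x => c * f x) L = c * lsum f L.
Proof. induction L; simpl; [ring| rewrite IHL; ring]. Qed.

Lemma lsum_incl {A} (f : A -> R) (L B : list A) : NoDup L -> NoDup B -> incl L B ->
  (forall x, In x B -> 0 <= f x) -> lsum f L <= lsum f B.
Proof.
  revert B. induction L as [|a L IH]; intros B HL HB Hinc Hf.
  - simpl. apply lsum_nonneg; auto.
  - assert (Ha : In a B) by (apply Hinc; left; auto).
    destruct (in_split a B Ha) as [B1 [B2 ->]].
    inversion HL; subst.
    rewrite lsum_app. simpl.
    assert (lsum f L <= lsum f (B1 ++ B2)).
    { apply IH; auto.
      - eapply NoDup_remove_1; eauto.
      - intros x Hx. assert (In x (B1 ++ a :: B2)) as Hx2 by (apply Hinc; right; auto).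
        apply in_app_or in Hx2. apply in_or_app. destruct Hx2 as [H|[H|H]]; auto.
        subst; contradiction.
      - intros x Hx. apply Hf. apply in_app_or in Hx. apply in_or_app. destruct Hx; simpl; auto. }
    rewrite lsum_app in H. lra.
Qed.

Fixpoint nsum (f : nat -> R) (M : nat) : R :=
  match M with O => 0 | S M' => nsum f M' + f (S M') end.

Lemma nsum_le f g M : (forall i, (1 <= i <= M)%nat -> f i <= g i) -> nsum f M <= nsum g M.
Proof.
  induction M; simpl; intros H; [lra|].
  assert (nsum f M <= nsum g M) by (apply IHM; intros; apply H; lia).
  assert (f (S M) <= g (S M)) by (apply H; lia). lra.
Qed.

Lemma nsum_plus f g M : nsum (fun i => f i + g i) M = nsum f M + nsum g M.
Proof. induction M; simpl; [ring| rewrite IHM; ring]. Qed.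

Lemma nsum_scal f c M : nsum (fun i => c * f i) M = c * nsum f M.
Proof. induction M; simpl; [ring| rewrite IHM; ring]. Qed.

Lemma nsum_tele (a P : nat -> R) M : (forall i, (1 <= i <= M)%nat -> a i <= P i - P (i - 1)%nat) ->
  nsum a M <= P M - P O.
Proof.
  induction M; simpl; intros H; [lra|].
  assert (nsum a M <= P M - P O) by (apply IHM; intros; apply H; lia).
  assert (a (S M) <= P (S M) - P (S M - 1)%nat) by (apply H; lia).
  replace (S M - 1)%nat with M in * by lia. lra.
Qed.

Fixpoint rng (M : nat) : list Z :=
  match M with O => 0%Z :: nil | S M' => Z.of_nat (S M') :: (- Z.of_nat (S M'))%Z :: rng M' end.

Lemma rng_In M x : In x (rng M) <-> (Z.abs x <= Z.of_nat M)%Z.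
Proof.
  induction M; simpl.
  - split; [intros [H|[]]; subst; simpl; lia| intros; left; lia].
  - rewrite IHM. split.
    + intros [H|[H|H]]; lia.
    + intros H. destruct (Z.eq_dec x (Z.pos (Pos.of_succ_nat M))) as [E|E]; [left; lia|].
      destruct (Z.eq_dec x (Z.neg (Pos.of_succ_nat M))) as [E2|E2]; [right; left; lia|].
      right; right; lia.
Qed.

Lemma rng_NoDup M : NoDup (rng M).
Proof.
  induction M; simpl.
  - constructor; [intros []| constructor].
  - constructor.
    + intros [H|H]; [lia|]. apply rng_In in H. lia.
    + constructor; auto. intros H. apply rng_In in H. lia.
Qed.

Lemma lsum_rng g M : lsum g (rng M) = g 0%Z + nsum (fun i => g (Z.of_nat i) + g (- Z.of_nat i)%Z) M.
Proof.
  induction M.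
  - simpl. ring.
  - change (lsum g (rng (S M))) with (g (Z.of_nat (S M)) + (g (- Z.of_nat (S M))%Z + lsum g (rng M))).
    rewrite IHM. change (nsum ?f (S M)) with (nsum f M + f (S M)). cbv beta. ring.
Qed.

Lemma NoDup_prod {A B} (l1 : list A) (l2 : list B) : NoDup l1 -> NoDup l2 -> NoDup (list_prod l1 l2).
Proof.
  induction l1 as [|a l1 IH]; intros H1 H2; simpl; [constructor|].
  inversion H1; subst.
  apply NoDup_app; auto.
  - apply NoDup_map_NoDup_ForallPairs; auto. intros x y _ _ E; inversion E; auto.
  - intros x Hx Hy. apply in_map_iff in Hx. destruct Hx as [y [<- _]].
    apply in_prod_iff in Hy. tauto.
Qed.

Lemma lsum_prod {A B} (F : A * B -> R) l1 l2 :
  lsum F (list_prod l1 l2) = lsum (fun x => lsum (fun y => F (x, y)) l2) l1.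
Proof.
  induction l1; simpl; [reflexivity|]. rewrite lsum_app, lsum_map, IHl1. reflexivity.
Qed.

Lemma frac_nonneg p q : 0 <= p -> 0 < q -> 0 <= p / q.
Proof. intros; unfold Rdiv; apply Rmult_le_pos; [auto| left; apply Rinv_0_lt_compat; auto]. Qed.

Lemma ineq_sq x : 1 <= x -> / (x+1)^2 + / (x+1) <= / x.
Proof.
  intros Hx. assert (E : / x - (/ (x+1)^2 + / (x+1)) = 1 / (x * (x+1)^2)) by (field; lra).
  assert (0 <= 1 / (x * (x+1)^2)) by (apply frac_nonneg; [lra| apply Rmult_lt_0_compat; [lra| apply pow_lt; lra]]).
  lra.
Qed.

Lemma ineq_q x : 1 <= x -> / (x+1)^4 + / (x+1)^3 <= / x^3.
Proof.
  intros Hx. assert (E : / x^3 - (/ (x+1)^4 + / (x+1)^3) = (2*x^3 + 6*x^2+4*x+1) / (x^3 * (x+1)^4)).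
  { field. lra. }
  assert (0 <= (2*x^3 + 6*x^2+4*x+1) / (x^3 * (x+1)^4)).
  { apply frac_nonneg; [nra| apply Rmult_lt_0_compat; apply pow_lt; lra]. }
  lra.
Qed.

Lemma sq_tail_inv c M : (1 <= c)%nat ->
  nsum (fun i => / INR (Nat.max c i) ^ 2) M <=
  if Nat.leb M c then INR M / INR c ^ 2 else 2 / INR c - / INR M.
Proof.
  intros Hc. assert (Hc' : 1 <= INR c) by (apply (le_INR 1); auto).
  induction M.
  - simpl. unfold Rdiv; rewrite Rmult_0_l; lra.
  - change (nsum (fun i => / INR (Nat.max c i) ^ 2) (S M)) with
      (nsum (fun i => / INR (Nat.max c i) ^ 2) M + / INR (Nat.max c (S M)) ^ 2).
    destruct (Nat.leb (S M) c) eqn:E1.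
    + apply Nat.leb_le in E1. assert (E2 : Nat.leb M c = true) by (apply Nat.leb_le; lia).
      rewrite E2 in IHM. rewrite Nat.max_l by lia. rewrite S_INR.
      replace ((INR M + 1) / INR c ^ 2) with (INR M / INR c ^2 + / INR c ^2) by (field; lra). lra.
    + apply Nat.leb_gt in E1. rewrite Nat.max_r by lia.
      destruct (Nat.leb M c) eqn:E2.
      * apply Nat.leb_le in E2. assert (M = c) by lia. subst M.
        rewrite S_INR. pose proof (ineq_sq (INR c) Hc').
        replace (INR c / INR c ^ 2) with (/ INR c) in IHM by (field; lra).
        replace (/ (INR c + 1) ^ 2) with (/ ((INR c + 1) ^ 2)) by reflexivity.
        lra.
      * apply Nat.leb_gt in E2. rewrite S_INR.
        assert (1 <= INR M) by (apply (le_INR 1); lia).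
        pose proof (ineq_sq (INR M) H). lra.
Qed.

Lemma sq_tail c M : (1 <= c)%nat -> nsum (fun i => / INR (Nat.max c i) ^ 2) M <= 2 / INR c.
Proof.
  intros Hc. pose proof (sq_tail_inv c M Hc) as H.
  assert (Hc' : 1 <= INR c) by (apply (le_INR 1); auto).
  destruct (Nat.leb M c) eqn:E.
  - apply Nat.leb_le in E. apply le_INR in E.
    assert (INR M / INR c ^ 2 <= 1 / INR c).
    { unfold Rdiv. replace (1 * / INR c) with (INR c * / INR c ^ 2) by (field; lra).
      apply Rmult_le_compat_r; auto. left; apply Rinv_0_lt_compat, pow_lt; lra. }
    assert (0 < / INR c) by (apply Rinv_0_lt_compat; lra).
    unfold Rdiv in *. lra.
  - apply Nat.leb_gt in E. assert (0 < INR M) by (apply lt_0_INR; lia).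
    assert (0 < / INR M) by (apply Rinv_0_lt_compat; lra). lra.
Qed.

Lemma q_tail_inv c M : (1 <= c)%nat ->
  nsum (fun i => / INR (Nat.max c i) ^ 4) M <=
  if Nat.leb M c then INR M / INR c ^ 4 else 2 / INR c ^ 3 - / INR M ^ 3.
Proof.
  intros Hc. assert (Hc' : 1 <= INR c) by (apply (le_INR 1); auto).
  induction M.
  - simpl. unfold Rdiv; rewrite Rmult_0_l; lra.
  - change (nsum (fun i => / INR (Nat.max c i) ^ 4) (S M)) with
      (nsum (fun i => / INR (Nat.max c i) ^ 4) M + / INR (Nat.max c (S M)) ^ 4).
    destruct (Nat.leb (S M) c) eqn:E1.
    + apply Nat.leb_le in E1. assert (E2 : Nat.leb M c = true) by (apply Nat.leb_le; lia).
      rewrite E2 in IHM. rewrite Nat.max_l by lia. rewrite S_INR.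
      replace ((INR M + 1) / INR c ^ 4) with (INR M / INR c ^4 + / INR c ^4) by (field; lra). lra.
    + apply Nat.leb_gt in E1. rewrite Nat.max_r by lia.
      destruct (Nat.leb M c) eqn:E2.
      * apply Nat.leb_le in E2. assert (M = c) by lia. subst M.
        rewrite S_INR. pose proof (ineq_q (INR c) Hc').
        replace (INR c / INR c ^ 4) with (/ INR c ^ 3) in IHM by (field; lra).
        lra.
      * apply Nat.leb_gt in E2. rewrite S_INR.
        assert (1 <= INR M) by (apply (le_INR 1); lia).
        pose proof (ineq_q (INR M) H). lra.
Qed.

Lemma q_tail c M : (1 <= c)%nat -> nsum (fun i => / INR (Nat.max c i) ^ 4) M <= 2 / INR c ^ 3.
Proof.
  intros Hc. pose proof (q_tail_inv c M Hc) as H.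
  assert (Hc' : 1 <= INR c) by (apply (le_INR 1); auto).
  destruct (Nat.leb M c) eqn:E.
  - apply Nat.leb_le in E. apply le_INR in E.
    assert (INR M / INR c ^ 4 <= 1 / INR c ^ 3).
    { unfold Rdiv. replace (1 * / INR c ^ 3) with (INR c * / INR c ^ 4) by (field; lra).
      apply Rmult_le_compat_r; auto. left; apply Rinv_0_lt_compat, pow_lt; lra. }
    assert (0 < / INR c ^ 3) by (apply Rinv_0_lt_compat, pow_lt; lra).
    unfold Rdiv in *. lra.
  - apply Nat.leb_gt in E. assert (0 < INR M) by (apply lt_0_INR; lia).
    assert (0 < / INR M ^ 3) by (apply Rinv_0_lt_compat, pow_lt; lra). lra.
Qed.

Definition vt (n t : nat) : R :=
  match t with O => 0 | S _ => if Nat.ltb t (6*n) then INR n ^2 / INR t ^2 else INR n ^4 / INR t ^4 end.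

Lemma vt_S n t : vt n (S t) = if Nat.ltb (S t) (6*n) then INR n ^2 / INR (S t) ^2 else INR n ^4 / INR (S t) ^4.
Proof. reflexivity. Qed.

Lemma vt_0 n : vt n 0 = 0.
Proof. reflexivity. Qed.

Lemma vt_nonneg n t : 0 <= vt n t.
Proof.
  destruct t as [|t']; [rewrite vt_0; lra| rewrite vt_S].
  assert (0 < INR (S t')) by (apply lt_0_INR; lia).
  destruct (Nat.ltb _ _); (apply frac_nonneg; [apply pow_le, pos_INR| apply pow_lt; lra]).
Qed.

Lemma vt_le1 n t : (1 <= t)%nat -> vt n t <= INR n ^2 / INR t ^2.
Proof.
  intros Ht. destruct t as [|t']; [lia|]. rewrite vt_S.
  set (tt := S t') in *.
  assert (0 < INR tt) by (apply lt_0_INR; lia).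
  destruct (Nat.ltb tt (6*n)) eqn:E; [lra|].
  apply Nat.ltb_ge in E. assert (INR n <= INR tt) by (apply le_INR; lia).
  assert (0 <= INR n) by apply pos_INR.
  assert (INR n ^2 <= INR tt ^2) by (apply pow_incr; lra).
  replace (INR n ^4 / INR tt ^4) with ((INR n ^2 / INR tt ^2) * (INR n ^2 / INR tt ^2)) by (field; lra).
  assert (INR n ^2 / INR tt ^2 <= 1).
  { unfold Rdiv. replace 1 with (INR tt ^2 * / INR tt ^2) by (field; lra).
    apply Rmult_le_compat_r; [left; apply Rinv_0_lt_compat, pow_lt; lra| auto]. }
  assert (0 <= INR n ^2 / INR tt ^2) by (apply frac_nonneg; [apply pow_le; lra| apply pow_lt; lra]).
  nra.
Qed.

Lemma vt_le2 n t : (1 <= t)%nat -> vt n t <= 36 * INR n ^4 / INR t ^4.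
Proof.
  intros Ht. destruct t as [|t']; [lia|]. rewrite vt_S.
  set (tt := S t') in *.
  assert (0 < INR tt) by (apply lt_0_INR; lia).
  assert (0 <= INR n) by apply pos_INR.
  assert (0 < INR tt ^ 4) by (apply pow_lt; lra).
  destruct (Nat.ltb tt (6*n)) eqn:E.
  - apply Nat.ltb_lt in E. assert (INR tt <= 6 * INR n).
    { replace 6 with (INR 6) by (simpl; lra). rewrite <- mult_INR. apply le_INR; lia. }
    replace (INR n ^2 / INR tt ^2) with (INR n ^2 * INR tt ^2 / INR tt ^4) by (field; lra).
    unfold Rdiv. apply Rmult_le_compat_r; [left; apply Rinv_0_lt_compat; lra|].
    assert (INR tt ^2 <= (6 * INR n)^2) by (apply pow_incr; lra).
    assert (0 <= INR n ^2) by (apply pow_le; lra). nra.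
  - unfold Rdiv. apply Rmult_le_compat_r; [left; apply Rinv_0_lt_compat; lra|].
    assert (0 <= INR n ^4) by (apply pow_le; lra). lra.
Qed.

Definition row (n c M : nat) : R := vt n c + 2 * nsum (fun i => vt n (Nat.max c i)) M.

Lemma row_A n c M : (1 <= c)%nat -> row n c M <= 5 * INR n ^2 / INR c.
Proof.
  intros Hc. unfold row.
  assert (Hc' : 1 <= INR c) by (apply (le_INR 1); auto).
  assert (0 <= INR n ^2) by (apply pow_le, pos_INR).
  assert (nsum (fun i => vt n (Nat.max c i)) M <= nsum (fun i => INR n ^2 * / INR (Nat.max c i) ^ 2) M).
  { apply nsum_le. intros i Hi. apply vt_le1. lia. }
  rewrite nsum_scal in H0. pose proof (sq_tail c M Hc).
  pose proof (vt_le1 n c Hc).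
  assert (INR n ^2 / INR c ^2 <= INR n ^2 / INR c).
  { unfold Rdiv. apply Rmult_le_compat_l; auto. apply Rinv_le_contravar; [lra|]. nra. }
  assert (INR n ^ 2 * nsum (fun i : nat => / INR (Nat.max c i) ^ 2) M <= INR n ^2 * (2 / INR c))
    by (apply Rmult_le_compat_l; auto).
  unfold Rdiv in *. lra.
Qed.

Lemma row_B n c M : (1 <= c)%nat -> row n c M <= 180 * INR n ^4 / INR c ^3.
Proof.
  intros Hc. unfold row.
  assert (Hc' : 1 <= INR c) by (apply (le_INR 1); auto).
  assert (0 <= INR n ^4) by (apply pow_le, pos_INR).
  assert (nsum (fun i => vt n (Nat.max c i)) M <= nsum (fun i => (36 * INR n ^4) * / INR (Nat.max c i) ^ 4) M).
  { apply nsum_le. intros i Hi. apply vt_le2. lia. }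
  rewrite nsum_scal in H0. pose proof (q_tail c M Hc).
  pose proof (vt_le2 n c Hc).
  assert (36 * INR n ^4 / INR c ^4 <= 36 * INR n ^4 / INR c ^3).
  { unfold Rdiv. apply Rmult_le_compat_l; [lra|]. apply Rinv_le_contravar; [apply pow_lt; lra|].
    replace (INR c ^ 4) with (INR c ^3 * INR c) by ring.
    assert (0 < INR c ^ 3) by (apply pow_lt; lra). nra. }
  assert (36 * INR n ^ 4 * nsum (fun i : nat => / INR (Nat.max c i) ^ 4) M <= 36 * INR n ^4 * (2 / INR c ^3))
    by (apply Rmult_le_compat_l; lra).
  unfold Rdiv in *. lra.
Qed.

Lemma row_0 n M : row n 0 M <= 4 * INR n ^2.
Proof.
  unfold row. rewrite vt_0.
  assert (0 <= INR n ^2) by (apply pow_le, pos_INR).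
  assert (nsum (fun i => vt n (Nat.max 0 i)) M <= nsum (fun i => INR n ^2 * / INR (Nat.max 1 i) ^ 2) M).
  { apply nsum_le. intros i Hi. rewrite Nat.max_0_l, Nat.max_r by lia. apply vt_le1. lia. }
  rewrite nsum_scal in H0. pose proof (sq_tail 1 M (le_n 1)).
  assert (INR n ^ 2 * nsum (fun i : nat => / INR (Nat.max 1 i) ^ 2) M <= INR n ^2 * (2 / INR 1))
    by (apply Rmult_le_compat_l; auto).
  simpl INR in *. unfold Rdiv in *. lra.
Qed.

Lemma ln_le a b : 0 < a -> a <= b -> ln a <= ln b.
Proof. intros Ha Hab. destruct Hab as [H|H]; [left; apply ln_increasing; auto| subst; lra]. Qed.

Lemma harm x : 2 <= x -> / x <= ln x - ln (x - 1).
Proof.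
  intros Hx.
  assert (E : x - 1 = x * (1 + - / x)) by (field; lra).
  assert (0 < / x) by (apply Rinv_0_lt_compat; lra).
  assert (/ x <= 1/2) by (replace (1/2) with (/ 2) by lra; apply Rinv_le_contravar; lra).
  rewrite E, ln_mult by lra.
  assert (ln (1 + - / x) <= - / x).
  { pose proof (exp_ineq1_le (- / x)). apply Rle_trans with (ln (exp (- / x))); [apply ln_le; lra| rewrite ln_exp; lra]. }
  lra.
Qed.

Lemma cube x : 2 <= x -> / x ^ 3 <= / (x - 1) ^ 2 - / x ^ 2.
Proof.
  intros Hx.
  assert (E : / (x - 1) ^ 2 - / x ^ 2 - / x ^ 3 = (x^2 + x - 1) / (x^3 * (x-1)^2)) by (field; lra).
  assert (0 <= (x^2 + x - 1) / (x^3 * (x-1)^2)).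
  { apply frac_nonneg; [nra| apply Rmult_lt_0_compat; apply pow_lt; lra]. }
  lra.
Qed.

Definition Rb (n c : nat) : R :=
  if Nat.eqb c 0 then 4 * INR n ^2 else if Nat.ltb c (6*n) then 5 * INR n ^2 / INR c
  else 180 * INR n ^4 / INR c ^3.

Lemma row_Rb n c M : row n c M <= Rb n c.
Proof.
  unfold Rb. destruct (Nat.eqb c 0) eqn:E.
  - apply Nat.eqb_eq in E; subst; apply row_0.
  - apply Nat.eqb_neq in E. destruct (Nat.ltb c (6*n)); [apply row_A| apply row_B]; lia.
Qed.

Definition P (n c : nat) : R :=
  if Nat.eqb c 0 then 0 else if Nat.leb c (6*n-1) then 5 * INR n ^2 * (1 + ln (INR c))
  else 5 * INR n ^2 * (1 + ln (INR (6*n-1))) + 180 * INR n ^4 * (/ INR (6*n-1) ^2 - / INR c ^2).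

Lemma P_third n c : (1 <= n)%nat -> (6*n - 1 <= c)%nat ->
  P n c = 5 * INR n ^2 * (1 + ln (INR (6*n-1))) + 180 * INR n ^4 * (/ INR (6*n-1) ^2 - / INR c ^2).
Proof.
  intros Hn Hc. unfold P.
  replace (Nat.eqb c 0) with false by (symmetry; apply Nat.eqb_neq; lia).
  destruct (Nat.leb c (6*n-1)) eqn:E; auto.
  apply Nat.leb_le in E. assert (c = (6*n-1)%nat) by lia. subst. ring.
Qed.

Lemma Rb_tele n i : (1 <= n)%nat -> (1 <= i)%nat -> Rb n i <= P n i - P n (i - 1).
Proof.
  intros Hn Hi.
  assert (0 <= INR n ^2) by (apply pow_le, pos_INR).
  assert (0 <= INR n ^4) by (apply pow_le, pos_INR).
  destruct (Nat.leb i (6*n-1)) eqn:E0.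
  - assert (E := proj1 (Nat.leb_le _ _) E0).
    unfold Rb. replace (Nat.eqb i 0) with false by (symmetry; apply Nat.eqb_neq; lia).
    replace (Nat.ltb i (6*n)) with true by (symmetry; apply Nat.ltb_lt; lia).
    unfold P. replace (Nat.eqb i 0) with false by (symmetry; apply Nat.eqb_neq; lia).
    rewrite E0.
    destruct (Nat.eq_dec i 1) as [->|Hi1].
    + simpl. rewrite ln_1. lra.
    + replace (Nat.eqb (i-1) 0) with false by (symmetry; apply Nat.eqb_neq; lia).
      replace (Nat.leb (i-1) (6*n-1)) with true by (symmetry; apply Nat.leb_le; lia).
      replace (INR (i-1)) with (INR i - 1) by (rewrite minus_INR by lia; simpl; lra).
      assert (2 <= INR i) by (replace 2 with (INR 2) by (simpl; lra); apply le_INR; lia).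
      pose proof (harm (INR i) H1).
      assert (5 * INR n ^2 * / INR i <= 5 * INR n ^2 * (ln (INR i) - ln (INR i - 1)))
        by (apply Rmult_le_compat_l; lra).
      unfold Rdiv. lra.
  - apply Nat.leb_gt in E0. rename E0 into E.
    unfold Rb. replace (Nat.eqb i 0) with false by (symmetry; apply Nat.eqb_neq; lia).
    replace (Nat.ltb i (6*n)) with false by (symmetry; apply Nat.ltb_ge; lia).
    rewrite (P_third n i), (P_third n (i-1)) by lia.
    replace (INR (i-1)) with (INR i - 1) by (rewrite minus_INR by lia; simpl; lra).
    assert (2 <= INR i) by (replace 2 with (INR 2) by (simpl; lra); apply le_INR; lia).
    pose proof (cube (INR i) H1).
    assert (180 * INR n ^4 * / INR i ^ 3 <= 180 * INR n ^4 * (/ (INR i - 1) ^ 2 - / INR i ^ 2))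
      by (apply Rmult_le_compat_l; lra).
    unfold Rdiv. lra.
Qed.

Lemma P_bound n c : (1 <= n)%nat ->
  P n c <= 5 * INR n ^2 * (1 + ln (INR (6*n-1))) + 180 * INR n ^4 / INR (6*n-1) ^2.
Proof.
  intros Hn.
  assert (0 <= INR n ^2) by (apply pow_le, pos_INR).
  assert (0 <= INR n ^4) by (apply pow_le, pos_INR).
  assert (1 <= INR (6*n-1)) by (apply (le_INR 1); lia).
  assert (0 < / INR (6*n-1) ^2) by (apply Rinv_0_lt_compat, pow_lt; lra).
  assert (0 <= 1 + ln (INR (6*n-1))).
  { pose proof (ln_le 1 (INR (6*n-1))). rewrite ln_1 in H3. lra. }
  unfold P. destruct (Nat.eqb c 0) eqn:E0.
  - assert (0 <= 5 * INR n ^ 2 * (1 + ln (INR (6 * n - 1)))) by (apply Rmult_le_pos; lra).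
    assert (0 <= 180 * INR n ^ 4 / INR (6 * n - 1) ^ 2) by (unfold Rdiv; apply Rmult_le_pos; lra).
    lra.
  - apply Nat.eqb_neq in E0. destruct (Nat.leb c (6*n-1)) eqn:E.
    + apply Nat.leb_le in E.
      assert (ln (INR c) <= ln (INR (6*n-1))) by (apply ln_le; [apply lt_0_INR; lia| apply le_INR; lia]).
      assert (5 * INR n ^ 2 * (1 + ln (INR c)) <= 5 * INR n ^ 2 * (1 + ln (INR (6 * n - 1))))
        by (apply Rmult_le_compat_l; lra).
      assert (0 <= 180 * INR n ^ 4 / INR (6 * n - 1) ^ 2) by (unfold Rdiv; apply Rmult_le_pos; lra).
      lra.
    + assert (0 < INR c) by (apply lt_0_INR; lia).
      assert (0 < / INR c ^2) by (apply Rinv_0_lt_compat, pow_lt; lra).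
      assert (180 * INR n ^4 * / INR c ^2 >= 0) by (apply Rle_ge, Rmult_le_pos; lra).
      unfold Rdiv. lra.
Qed.

Lemma nsum_Rb n M : (1 <= n)%nat ->
  nsum (Rb n) M <= 5 * INR n ^2 * (1 + ln (INR (6*n-1))) + 180 * INR n ^4 / INR (6*n-1) ^2.
Proof.
  intros Hn. eapply Rle_trans.
  - apply (nsum_tele (Rb n) (P n)). intros i Hi. apply Rb_tele; lia.
  - assert (P n 0 = 0) by reflexivity. pose proof (P_bound n M Hn). lra.
Qed.

Definition tZ (m : Z2) : nat := Nat.max (Z.abs_nat (fst m)) (Z.abs_nat (snd m)).
Definition V (n : nat) (m : Z2) : R := vt n (tZ m).

Lemma nsum_ext f g M : (forall i, f i = g i) -> nsum f M = nsum g M.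
Proof. intros H; induction M; simpl; [reflexivity| rewrite IHM, H; reflexivity]. Qed.

Lemma exists_bound (L : list Z2) : exists M, forall m, In m L -> (tZ m <= M)%nat.
Proof.
  induction L as [|a L [M HM]].
  - exists O; intros m [].
  - exists (Nat.max (tZ a) M). intros m [<-|Hm]; [lia| specialize (HM m Hm); lia].
Qed.

Lemma lsum_ext {A} (f g : A -> R) L : (forall x, f x = g x) -> lsum f L = lsum g L.
Proof. intros H; induction L; simpl; [reflexivity| rewrite IHL, H; reflexivity]. Qed.

Lemma inner_row n x M : lsum (fun y => V n (x, y)) (rng M) = row n (Z.abs_nat x) M.
Proof.
  rewrite lsum_rng. unfold row, V, tZ; simpl fst; simpl snd.
  replace (Z.abs_nat 0) with O by reflexivity. rewrite Nat.max_0_r.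
  rewrite (nsum_ext _ (fun i => 2 * vt n (Nat.max (Z.abs_nat x) i))).
  - rewrite nsum_scal. reflexivity.
  - intros i. replace (Z.abs_nat (Z.of_nat i)) with i by lia.
    replace (Z.abs_nat (- Z.of_nat i)) with i by lia. ring.
Qed.

Lemma lattice n L : (1 <= n)%nat -> NoDup L ->
  lsum (V n) L <= 4 * INR n ^2 + 2 * (5 * INR n ^2 * (1 + ln (INR (6*n-1))) + 180 * INR n ^4 / INR (6*n-1) ^2).
Proof.
  intros Hn HL. destruct (exists_bound L) as [M HM].
  eapply Rle_trans.
  - apply (lsum_incl _ L (list_prod (rng M) (rng M))); auto.
    + apply NoDup_prod; apply rng_NoDup.
    + intros [x y] Hm. apply in_prod_iff. specialize (HM _ Hm). unfold tZ in HM; simpl in HM.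
      split; apply rng_In; lia.
    + intros; apply vt_nonneg.
  - eapply Rle_trans; [apply Req_le; apply (lsum_prod (V n) (rng M) (rng M))|].
    rewrite (lsum_ext _ (fun x => row n (Z.abs_nat x) M)) by (intros; apply inner_row).
    rewrite lsum_rng. replace (Z.abs_nat 0) with O by reflexivity.
    rewrite (nsum_ext _ (fun i => 2 * row n i M)).
    2:{ intros i. replace (Z.abs_nat (Z.of_nat i)) with i by lia.
        replace (Z.abs_nat (- Z.of_nat i)) with i by lia. ring. }
    rewrite nsum_scal.
    pose proof (row_0 n M).
    assert (nsum (fun i => row n i M) M <= nsum (Rb n) M) by (apply nsum_le; intros; apply row_Rb).
    pose proof (nsum_Rb n M Hn). lra.
Qed.

Lemma G0_nonneg k l : 0 <= G0 k l.
Proof.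
  unfold G0. assert (0 < PI) by apply PI_RGT_0.
  apply Rmult_le_pos; [apply Rmult_le_pos; [apply Rmult_le_pos; [lra| apply pow_le; lra]| apply pow2_ge_0]| apply pow2_ge_0].
Qed.

Definition Gc (s : Z2) (kl : Z2 * Z2) : R :=
  if Z2eqb (Z2add (fst kl) (snd kl)) s then G0 (fst kl) (snd kl) / 2 else 0.

Lemma pair_bound j k l : j <> Z2zero -> k <> Z2zero -> l <> Z2zero ->
  Cnorm2 (pairing (H_fun (e_fun j)) k l) <= Gc (Z2opp j) (k, l) + Gc j (k, l).
Proof.
  intros Hj Hk Hl. unfold Gc; simpl fst; simpl snd.
  pose proof (G0_nonneg k l).
  assert (S2 : sqrt 2 * sqrt 2 = 2) by (apply sqrt_sqrt; lra).
  unfold e_fun. destruct (Z2plusb j).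
  - rewrite pairing_gen by auto.
    assert (Cnorm2 (RtoC (sqrt 2 / 2)) = 1/2) as ->.
    { unfold Cnorm2, RtoC; simpl. nra. }
    destruct (Z2eqb _ _), (Z2eqb _ _); lra.
  - destruct (Z2minusb j).
    + rewrite pairing_gen by auto.
      assert (Cnorm2 (0, - (sqrt 2 / 2)) = 1/2) as ->.
      { unfold Cnorm2; simpl. nra. }
      assert (Cnorm2 (0, (sqrt 2 / 2)) = 1/2) as ->.
      { unfold Cnorm2; simpl. nra. }
      destruct (Z2eqb _ _), (Z2eqb _ _); lra.
    + assert (Cnorm2 (pairing (H_fun nil) k l) = 0) as ->.
      { unfold pairing, H_fun, dot_mul, lift_x, lift_y, grad, Cnorm2, Cmul, Csub, Cadd, Copp, C0, RtoC; simpl. ring. }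
      destruct (Z2eqb _ _), (Z2eqb _ _); lra.
Qed.

Lemma tZ_bounds m : INR (tZ m)^2 <= Z2norm2 m <= 2 * INR (tZ m)^2.
Proof.
  destruct m as [m1 m2]. unfold Z2norm2, tZ; simpl fst; simpl snd.
  rewrite INR_IZR_INZ.
  set (t := Z.of_nat (Nat.max (Z.abs_nat m1) (Z.abs_nat m2))).
  assert (Ht : t = Z.max (Z.abs m1) (Z.abs m2)) by (unfold t; lia).
  assert (A1 : (Z.abs m1 * Z.abs m1 = m1 * m1)%Z) by (destruct (Z.abs_spec m1) as [[_ ->]|[_ ->]]; ring).
  assert (A2 : (Z.abs m2 * Z.abs m2 = m2 * m2)%Z) by (destruct (Z.abs_spec m2) as [[_ ->]|[_ ->]]; ring).
  assert (B1 : (0 <= Z.abs m1 <= t)%Z) by lia.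
  assert (B2 : (0 <= Z.abs m2 <= t)%Z) by lia.
  assert (C1 : (Z.abs m1 * Z.abs m1 <= t * t)%Z) by (apply Z.mul_le_mono_nonneg; lia).
  assert (C2 : (Z.abs m2 * Z.abs m2 <= t * t)%Z) by (apply Z.mul_le_mono_nonneg; lia).
  assert (Z1 : (t * t <= m1 * m1 + m2 * m2)%Z).
  { destruct (Z.max_spec (Z.abs m1) (Z.abs m2)) as [[_ E]|[_ E]]; rewrite Ht, E; rewrite ?A1, ?A2; nia. }
  assert (Z2' : (m1 * m1 + m2 * m2 <= 2 * (t * t))%Z) by lia.
  apply IZR_le in Z1. apply IZR_le in Z2'.
  rewrite plus_IZR, !mult_IZR in Z1, Z2'. rewrite ?mult_IZR in Z2'. simpl pow. split; lra.
Qed.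

Lemma tZ_pos m : m <> Z2zero -> (1 <= tZ m)%nat.
Proof.
  destruct m as [m1 m2]; unfold tZ, Z2zero; simpl. intros H.
  destruct (Z.eq_dec m1 0); destruct (Z.eq_dec m2 0); subst; try (exfalso; apply H; reflexivity); lia.
Qed.

Lemma G0_sym k l : G0 k l = G0 l k.
Proof. unfold G0, wedge. ring. Qed.

Lemma vt_big n t : (1 <= n)%nat -> (6 * n <= t)%nat -> vt n t = INR n ^4 / INR t ^4.
Proof.
  intros Hn Ht. destruct t as [|t']; [lia|]. rewrite vt_S.
  replace (Nat.ltb (S t') (6*n)) with false by (symmetry; apply Nat.ltb_ge; lia). reflexivity.
Qed.

Lemma vt_small n t : (1 <= t)%nat -> (t < 6 * n)%nat -> vt n t = INR n ^2 / INR t ^2.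
Proof.
  intros H1 Ht. destruct t as [|t']; [lia|]. rewrite vt_S.
  replace (Nat.ltb (S t') (6*n)) with true by (symmetry; apply Nat.ltb_lt; lia). reflexivity.
Qed.

Lemma G0_far n k l : (1 <= n)%nat -> k <> Z2zero -> l <> Z2zero ->
  Z2norm2 (Z2add k l) <= 2 * INR n ^2 -> (6 * n <= tZ k)%nat ->
  G0 k l / 2 <= 288 * PI ^ 4 * V n k.
Proof.
  intros Hn Hk Hl HS Ht.
  pose proof (norm2_pos k Hk) as Hnk. pose proof (norm2_pos l Hl) as Hnl.
  pose proof (tZ_bounds k) as [Tk1 Tk2].
  unfold V. rewrite vt_big by auto.
  set (t := INR (tZ k)) in *.
  assert (Hn1 : 1 <= INR n) by (apply (le_INR 1); auto).
  assert (Ht6 : 6 * INR n <= t).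
  { unfold t. replace 6 with (INR 6) by (simpl; lra). rewrite <- mult_INR. apply le_INR; auto. }
  assert (HPI : 0 < PI) by apply PI_RGT_0.
  destruct k as [k1 k2], l as [l1 l2].
  unfold G0, wedge, Z2norm2, Z2add in *; simpl fst in *; simpl snd in *.
  rewrite !plus_IZR in HS.
  set (S2 := (IZR k1 + IZR l1) ^ 2 + (IZR k2 + IZR l2) ^ 2) in *.
  set (nk := IZR k1 ^ 2 + IZR k2 ^ 2) in *.
  assert (HS0 : 0 <= S2) by (unfold S2; pose proof (pow2_ge_0 (IZR k1 + IZR l1)); pose proof (pow2_ge_0 (IZR k2 + IZR l2)); lra).
  assert (16 * S2 <= nk) by nra.
  pose proof (R2r (IZR k1) (IZR k2) (IZR l1) (IZR l2) Hnk Hnl H) as R.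
  cbv zeta in R. fold S2 nk in R.
  set (g := (IZR k1 * IZR l2 - IZR k2 * IZR l1) ^ 2 * (/ (IZR l1 ^ 2 + IZR l2 ^ 2) - / nk) ^ 2) in *.
  assert (E : 4 * PI ^ 4 * (IZR k1 * IZR l2 - IZR k2 * IZR l1) ^ 2 * (/ (IZR l1 ^ 2 + IZR l2 ^ 2) - / nk) ^ 2 / 2
            = 2 * PI ^ 4 * g) by (unfold g; field; split; lra).
  rewrite E.
  assert (S2 ^ 2 <= 4 * INR n ^ 4) by nra.
  assert (0 < t) by lra.
  assert (t ^ 4 <= nk ^ 2) by nra.
  assert (0 < t ^ 4) by (apply pow_lt; lra).
  assert (S2 ^ 2 / nk ^ 2 <= 4 * INR n ^ 4 / t ^ 4).
  { unfold Rdiv. apply Rmult_le_compat; try lra.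
    - apply pow2_ge_0.
    - left; apply Rinv_0_lt_compat; nra.
    - apply Rinv_le_contravar; lra. }
  assert (0 < PI ^ 4) by (apply pow_lt; lra).
  assert (g <= 36 * (4 * INR n ^ 4 / t ^ 4)) by (unfold Rdiv in *; nra).
  assert (2 * PI ^ 4 * g <= 2 * PI ^ 4 * (36 * (4 * INR n ^ 4 / t ^ 4))) by (apply Rmult_le_compat_l; lra).
  unfold Rdiv in *. lra.
Qed.

Lemma G0_near n k l : (1 <= n)%nat -> k <> Z2zero -> l <> Z2zero ->
  Z2norm2 (Z2add k l) <= 2 * INR n ^2 -> (tZ k < 6 * n)%nat -> (tZ l < 6 * n)%nat ->
  G0 k l / 2 <= 288 * PI ^ 4 * (V n k + V n l).
Proof.
  intros Hn Hk Hl HS Htk Htl.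
  pose proof (norm2_pos k Hk) as Hnk. pose proof (norm2_pos l Hl) as Hnl.
  pose proof (tZ_bounds k) as [Tk1 Tk2]. pose proof (tZ_bounds l) as [Tl1 Tl2].
  unfold V. rewrite (vt_small n (tZ k)), (vt_small n (tZ l)) by (auto; apply tZ_pos; auto).
  assert (1 <= INR (tZ k)) by (apply (le_INR 1), tZ_pos; auto).
  assert (1 <= INR (tZ l)) by (apply (le_INR 1), tZ_pos; auto).
  set (tk := INR (tZ k)) in *. set (tl := INR (tZ l)) in *.
  assert (HPI : 0 < PI) by apply PI_RGT_0.
  assert (0 < PI ^ 4) by (apply pow_lt; lra).
  assert (0 <= INR n ^ 2) by (apply pow_le, pos_INR).
  assert (Ik : / Z2norm2 k <= / tk ^ 2) by (apply Rinv_le_contravar; [apply pow_lt; lra| lra]).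
  assert (Il : / Z2norm2 l <= / tl ^ 2) by (apply Rinv_le_contravar; [apply pow_lt; lra| lra]).
  assert (0 < / Z2norm2 k) by (apply Rinv_0_lt_compat; lra).
  assert (0 < / Z2norm2 l) by (apply Rinv_0_lt_compat; lra).
  destruct k as [k1 k2], l as [l1 l2].
  unfold G0, wedge, Z2norm2, Z2add in *; simpl fst in *; simpl snd in *.
  rewrite !plus_IZR in HS.
  pose proof (R1r (IZR k1) (IZR k2) (IZR l1) (IZR l2) Hnk Hnl) as R.
  cbv zeta in R.
  set (S2 := (IZR k1 + IZR l1) ^ 2 + (IZR k2 + IZR l2) ^ 2) in *.
  set (nk := IZR k1 ^ 2 + IZR k2 ^ 2) in *.
  set (nl := IZR l1 ^ 2 + IZR l2 ^ 2) in *.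
  assert (HS0 : 0 <= S2) by (unfold S2; pose proof (pow2_ge_0 (IZR k1 + IZR l1)); pose proof (pow2_ge_0 (IZR k2 + IZR l2)); lra).
  set (g := (IZR k1 * IZR l2 - IZR k2 * IZR l1) ^ 2 * (/ nl - / nk) ^ 2) in *.
  assert (E : 4 * PI ^ 4 * (IZR k1 * IZR l2 - IZR k2 * IZR l1) ^ 2 * (/ nl - / nk) ^ 2 / 2
            = 2 * PI ^ 4 * g) by (unfold g; field; split; lra).
  rewrite E.
  assert (S2 * (/ nk + / nl) <= 2 * INR n ^ 2 * (/ tk ^ 2 + / tl ^ 2)).
  { apply Rmult_le_compat; lra. }
  assert (2 * PI ^ 4 * g <= 2 * PI ^ 4 * (2 * INR n ^ 2 * (/ tk ^ 2 + / tl ^ 2))) by (apply Rmult_le_compat_l; lra).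
  assert (0 <= INR n ^ 2 * (/ tk ^ 2 + / tl ^ 2)).
  { apply Rmult_le_pos; auto. assert (0 < / tk ^2) by (apply Rinv_0_lt_compat, pow_lt; lra).
    assert (0 < / tl ^2) by (apply Rinv_0_lt_compat, pow_lt; lra). lra. }
  unfold Rdiv. nra.
Qed.

Lemma G0_bound n k l : (1 <= n)%nat -> k <> Z2zero -> l <> Z2zero ->
  Z2norm2 (Z2add k l) <= 2 * INR n ^2 ->
  G0 k l / 2 <= 288 * PI ^ 4 * (V n k + V n l).
Proof.
  intros Hn Hk Hl HS.
  assert (HPI : 0 < PI) by apply PI_RGT_0.
  assert (0 < PI ^ 4) by (apply pow_lt; lra).
  assert (0 <= V n k) by apply vt_nonneg. assert (0 <= V n l) by apply vt_nonneg.
  destruct (le_lt_dec (6*n) (tZ k)).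
  - pose proof (G0_far n k l Hn Hk Hl HS l0). nra.
  - destruct (le_lt_dec (6*n) (tZ l)).
    + assert (Z2norm2 (Z2add l k) <= 2 * INR n ^2).
      { replace (Z2add l k) with (Z2add k l) by (destruct k, l; unfold Z2add; simpl; f_equal; lia). auto. }
      pose proof (G0_far n l k Hn Hl Hk H2 l1). rewrite G0_sym. nra.
    + apply G0_near; auto.
Qed.

Definition LB (n : nat) : R :=
  4 * INR n ^2 + 2 * (5 * INR n ^2 * (1 + ln (INR (6*n-1))) + 180 * INR n ^4 / INR (6*n-1) ^2).

Lemma Gc_filter s S :
  lsum (Gc s) S = lsum (fun k => G0 k (Z2sub s k) / 2)
    (map fst (filter (fun kl => Z2eqb (Z2add (fst kl) (snd kl)) s) S)).
Proof.
  rewrite lsum_map. induction S as [|[k l] S IH]; simpl; [reflexivity|].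
  unfold Gc at 1; simpl fst; simpl snd.
  destruct (Z2eqb (Z2add k l) s) eqn:E; simpl.
  - rewrite IH. apply Z2eqb_iff in E.
    replace (Z2sub s k) with l; [reflexivity|].
    subst s. destruct k, l; unfold Z2sub, Z2add, Z2opp; simpl; f_equal; lia.
  - rewrite IH. ring.
Qed.

Lemma sum_Gc n s S : (1 <= n)%nat -> Z2norm2 s <= 2 * INR n ^2 -> NoDup S ->
  (forall kl, In kl S -> fst kl <> Z2zero /\ snd kl <> Z2zero) ->
  lsum (Gc s) S <= 288 * PI ^ 4 * (2 * LB n).
Proof.
  intros Hn Hs HS Hnz. rewrite Gc_filter.
  set (F := filter (fun kl => Z2eqb (Z2add (fst kl) (snd kl)) s) S).
  assert (HF : forall kl, In kl F -> snd kl = Z2sub s (fst kl) /\ fst kl <> Z2zero /\ snd kl <> Z2zero).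
  { intros [k l] Hkl. unfold F in Hkl. apply filter_In in Hkl as [Hin E].
    apply Z2eqb_iff in E. simpl in *. pose proof (Hnz _ Hin) as [H1 H2]. simpl in *.
    split; auto. subst s. destruct k, l; unfold Z2sub, Z2add, Z2opp; simpl; f_equal; lia. }
  assert (NF : NoDup (map fst F)).
  { apply NoDup_map_NoDup_ForallPairs; [|apply NoDup_filter; auto].
    intros [k l] [k' l'] H1 H2 E. simpl in E. subst k'.
    apply HF in H1. apply HF in H2. simpl in *. destruct H1 as [-> _], H2 as [-> _]. reflexivity. }
  assert (HK : forall k, In k (map fst F) -> k <> Z2zero /\ Z2sub s k <> Z2zero).
  { intros k Hk. apply in_map_iff in Hk as [[k0 l0] [E Hin]]. simpl in E. subst k0.
    apply HF in Hin. simpl in Hin. destruct Hin as [-> [H1 H2]]. auto. }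
  set (K := map fst F) in *.
  apply Rle_trans with (lsum (fun k => 288 * PI ^ 4 * (V n k + V n (Z2sub s k))) K).
  { apply lsum_le. intros k Hk. destruct (HK k Hk) as [H1 H2]. apply G0_bound; auto.
    replace (Z2add k (Z2sub s k)) with s; auto.
    destruct k, s; unfold Z2sub, Z2add, Z2opp; simpl; f_equal; lia. }
  rewrite lsum_scal, lsum_plus.
  assert (HPI : 0 < PI) by apply PI_RGT_0.
  assert (0 < PI ^ 4) by (apply pow_lt; lra).
  assert (lsum (V n) K <= LB n) by (apply lattice; auto).
  assert (lsum (fun k => V n (Z2sub s k)) K <= LB n).
  { rewrite <- (lsum_map (V n) (Z2sub s)). apply lattice; auto.
    apply NoDup_map_NoDup_ForallPairs; auto.
    intros a b _ _ E. destruct a, b, s; unfold Z2sub, Z2add, Z2opp in E; simpl in E.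
    inversion E. f_equal; lia. }
  apply Rmult_le_compat_l; lra.
Qed.

Lemma LB_bound n Jr : (1 <= n)%nat -> INR n <= Jr -> 2 <= Jr -> LB n <= 100 * Jr ^ 2 * ln Jr.
Proof.
  intros Hn HnJ HJ.
  assert (Hn1 : 1 <= INR n) by (apply (le_INR 1); auto).
  assert (HN1 : INR (6*n-1) = 6 * INR n - 1).
  { rewrite minus_INR by lia. rewrite mult_INR. simpl. lra. }
  unfold LB. rewrite HN1.
  assert (A1 : 180 * INR n ^ 4 / (6 * INR n - 1) ^ 2 <= 8 * INR n ^ 2).
  { assert (25 * INR n ^2 <= (6 * INR n - 1) ^ 2) by nra.
    assert (0 < (6 * INR n - 1) ^ 2) by (apply pow_lt; lra).
    apply (Rmult_le_reg_r ((6 * INR n - 1) ^ 2)); auto.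
    unfold Rdiv. rewrite Rmult_assoc, Rinv_l by lra. nra. }
  assert (L2 : / 2 < ln 2) by apply ln_lt_2.
  assert (Ln6 : ln (6 * INR n - 1) <= 3 * ln 2 + ln (INR n)).
  { assert (ln (6 * INR n - 1) <= ln (8 * INR n)) by (apply ln_le; lra).
    rewrite ln_mult in H by lra.
    replace 8 with (2 ^ 3) in H by ring. rewrite ln_pow in H by lra. simpl INR in H. lra. }
  assert (LnJ : ln (INR n) <= ln Jr) by (apply ln_le; lra).
  assert (Ln2J : ln 2 <= ln Jr) by (apply ln_le; lra).
  assert (0 <= INR n ^ 2) by (apply pow_le; lra).
  assert (INR n ^ 2 <= Jr ^ 2) by (apply pow_incr; lra).
  assert (Hl0 : 0 < ln Jr) by lra.
  assert (INR n ^ 2 * (1 + ln (6 * INR n - 1)) <= INR n ^ 2 * (1 + 3 * ln 2 + ln (INR n)))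
    by (apply Rmult_le_compat_l; lra).
  assert (INR n ^ 2 * (1 + 3 * ln 2 + ln (INR n)) <= INR n ^ 2 * (6 * ln Jr))
    by (apply Rmult_le_compat_l; lra).
  assert (INR n ^ 2 * ln Jr <= Jr ^ 2 * ln Jr) by (apply Rmult_le_compat_r; lra).
  assert (INR n ^ 2 <= 2 * (INR n ^ 2 * ln Jr)) by nra.
  assert (E1 : 4 * INR n ^ 2 + 2 * (5 * INR n ^ 2 * (1 + ln (6 * INR n - 1)) + 180 * INR n ^ 4 / (6 * INR n - 1) ^ 2)
     = 4 * INR n ^ 2 + 10 * (INR n ^ 2 * (1 + ln (6 * INR n - 1))) + 2 * (180 * INR n ^ 4 / (6 * INR n - 1) ^ 2)) by ring.
  rewrite E1.
  assert (E2 : INR n ^ 2 * (6 * ln Jr) = 6 * (INR n ^ 2 * ln Jr)) by ring.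
  assert (E3 : 100 * Jr ^ 2 * ln Jr = 100 * (Jr ^ 2 * ln Jr)) by ring.
  lra.
Qed.

Theorem mainTheorem15 :
  exists Cst : R, 0 < Cst /\
    forall j : Z2, 2 <= Z2norm j ->
    forall S : list (Z2 * Z2), NoDup S ->
      (forall kl, In kl S -> fst kl <> Z2zero /\ snd kl <> Z2zero) ->
      partial_sum (H_fun (e_fun j)) S <= Cst * Z2norm j ^ 2 * ln (Z2norm j).
Proof.
  assert (HPI : 0 < PI) by apply PI_RGT_0.
  assert (HP4 : 0 < PI ^ 4) by (apply pow_lt; lra).
  exists (1152 * 100 * PI ^ 4). split; [lra|].
  intros j HJ S HS Hnz.
  assert (HJ2 : 0 <= Z2norm2 j) by (unfold Z2norm2; pose proof (pow2_ge_0 (IZR (fst j))); pose proof (pow2_ge_0 (IZR (snd j))); lra).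
  assert (EJ : Z2norm j ^ 2 = Z2norm2 j) by (unfold Z2norm; apply pow2_sqrt; auto).
  set (n := tZ j).
  pose proof (tZ_bounds j) as [T1 T2]. fold n in T1, T2.
  assert (Hj0 : j <> Z2zero).
  { intro E. subst j. unfold Z2norm, Z2norm2 in HJ. simpl in HJ. rewrite Rmult_0_l, Rplus_0_l, sqrt_0 in HJ. lra. }
  assert (Hn : (1 <= n)%nat) by (apply tZ_pos; auto).
  assert (HnJ : INR n <= Z2norm j).
  { unfold Z2norm. rewrite <- (sqrt_pow2 (INR n)) by apply pos_INR. apply sqrt_le_1_alt; lra. }
  change (partial_sum (H_fun (e_fun j)) S) with
    (lsum (fun kl => Cnorm2 (pairing (H_fun (e_fun j)) (fst kl) (snd kl))) S).
  apply Rle_trans with (lsum (Gc (Z2opp j)) S + lsum (Gc j) S).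
  { rewrite <- lsum_plus. apply lsum_le. intros [k l] Hkl. destruct (Hnz _ Hkl) as [H1 H2].
    apply pair_bound; auto. }
  assert (Z2norm2 (Z2opp j) = Z2norm2 j) as Eo.
  { destruct j; unfold Z2norm2, Z2opp; simpl; rewrite !opp_IZR; ring. }
  pose proof (sum_Gc n (Z2opp j) S Hn ltac:(lra) HS Hnz).
  pose proof (sum_Gc n j S Hn ltac:(lra) HS Hnz).
  pose proof (LB_bound n (Z2norm j) Hn HnJ HJ).
  assert (288 * PI ^ 4 * (2 * LB n) <= 288 * PI ^ 4 * (2 * (100 * Z2norm j ^ 2 * ln (Z2norm j))))
    by (apply Rmult_le_compat_l; lra).
  lra.
Qed.
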